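(* Let $I\subset K[x_1,\ldots,x_n]$ be a nonzero graded ideal with generic tropical variety $\mathrm{gT}(I)$. If $\omega\in\mathrm{gT}(I)$, then $\sigma(\omega)\in\mathrm{gT}(I)$ for every $\sigma\in S_n$.
   Context: $K$ is an algebraically closed field of characteristic $0$ with trivial valuation. Each $g=(g_{ij})\in\mathrm{GL}_n(K)$ acts on $K[x_1,\ldots,x_n]$ by $x_i\mapsto\sum_j g_{ij}x_j$; $\mathrm{GL}_n(K)$ has the Zariski topology. For $f=\sum_\nu a_\nu x^\nu$ and $\omega\in\mathbb{R}^n$, $\mathrm{in}_\omega(f)$ is the sum of the terms with $\omega\cdot\nu$ minimal, and $T(I)=\{\omega:\mathrm{in}_\omega(f)\text{ is not a monomial for every }f\in I\}$ (viewed as a subfan of the Gröbner fan). The generic tropical variety $\mathrm{gT}(I)$ is the fan equal to $T(g(I))$ for all $g$ in some non-empty Zariski-open subset of $\mathrm{GL}_n(K)$; such a fan exists for every nonzero graded ideal (it is empty if $\dim I=0$). $S_n$ is the symmetric group, and for $\sigma\in S_n$, $\sigma(\omega)=(\omega_{\sigma(1)},\ldots,\omega_{\sigma(n)})$. *)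

(* Defs.v *)
From HB Require Import structures.
From mathcomp Require Import all_boot all_order all_algebra all_fingroup.
From mathcomp Require Import reals.
From mathcomp Require Import mpoly.

Set Implicit Arguments.
Unset Strict Implicit.
Unset Printing Implicit Defensive.
Import Order.TTheory GRing.Theory Num.Theory.
Local Open Scope ring_scope.

Section Defs.
Variables (K : fieldType) (n : nat).

Definition is_ideal (I : {mpoly K[n]} -> Prop) : Prop :=
  [/\ I 0, (forall f g, I f -> I g -> I (f + g)) & (forall f g, I g -> I (f * g))].

Definition hcomp (d : nat) (f : {mpoly K[n]}) : {mpoly K[n]} :=
  \sum_(m <- msupp f | mdeg m == d) f@_m *: 'X_[m].

Definition is_graded_ideal (I : {mpoly K[n]} -> Prop) : Prop :=
  is_ideal I /\ (forall f d, I f -> I (hcomp d f)).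

Definition nonzero_ideal (I : {mpoly K[n]} -> Prop) : Prop :=
  exists f, I f /\ f != 0.

Definition lin_act (g : 'M[K]_n) (f : {mpoly K[n]}) : {mpoly K[n]} :=
  f \mPo [tuple \sum_(j < n) g i j *: 'X_j | i < n].

Definition act_ideal (g : 'M[K]_n) (I : {mpoly K[n]} -> Prop) : {mpoly K[n]} -> Prop :=
  fun h => exists f, I f /\ h = lin_act g f.

(* Zariski topology on GL_n(K): open sets are GL_n minus the common zero set of
   a family S of polynomials in the n*n matrix entries *)
Definition mx_entries (g : 'M[K]_n) : 'I_(n * n) -> K := fun k => mxvec g 0 k.

Definition zariski_open_GL (U : 'M[K]_n -> Prop) : Prop :=
  exists S : {mpoly K[n * n]} -> Prop,
    forall g, U g <-> (g \in unitmx /\ exists p, S p /\ p.@[mx_entries g] != 0).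

Variable R : realType.

Definition wt (w : 'I_n -> R) (m : 'X_{1..n}) : R := \sum_(i < n) w i * (m i)%:R.

Definition in_form (w : 'I_n -> R) (f : {mpoly K[n]}) : {mpoly K[n]} :=
  \sum_(m <- msupp f | all (fun m' => wt w m <= wt w m') (msupp f)) f@_m *: 'X_[m].

Definition is_monomial (p : {mpoly K[n]}) : Prop :=
  exists c m, c != 0 /\ p = c *: 'X_[m].

Definition trop (I : {mpoly K[n]} -> Prop) (w : 'I_n -> R) : Prop :=
  forall f, I f -> ~ is_monomial (in_form w f).

Definition is_generic_trop (I : {mpoly K[n]} -> Prop) (F : ('I_n -> R) -> Prop) : Prop :=
  exists U : 'M[K]_n -> Prop,
    [/\ zariski_open_GL U, (exists g, U g) &
        forall g, U g -> forall w, trop (act_ideal g I) w <-> F w].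

End Defs.

(* Main.v *)
Require Import Defs.
From HB Require Import structures.
From mathcomp Require Import all_boot all_order all_algebra all_fingroup.
From mathcomp Require Import reals.
From mathcomp Require Import mpoly.
Set Implicit Arguments.
Unset Strict Implicit.
Unset Printing Implicit Defensive.
Import Order.TTheory GRing.Theory Num.Theory.
Local Open Scope ring_scope.

Section Zar.
Variables (K : closedFieldType) (n : nat).

Lemma poly_nonroot (q : {poly K}) : q != 0 -> exists x, q.[x] != 0.
Proof.
move=> q0; have : size ('X * q - 1) != 1%N.
  rewrite mulrC -polyCN size_MXaddC (negbTE q0) /=.
  by rewrite eqSS size_poly_eq0.
case/closed_rootP=> x; rewrite /root hornerD hornerN hornerM hornerX hornerC.
rewrite subr_eq0 => /eqP e; exists x; apply/eqP => qx.
by move: e; rewrite qx mulr0 => /eqP; rewrite eq_sym oner_eq0.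
Qed.

Definition pe (p0 : {mpoly K[n * n]}) (A : 'M[{poly K}]_n) : {poly K} :=
  \sum_(m <- msupp p0) (p0@_m)%:P * \prod_(i < n * n) (mxvec A 0 i) ^+ m i.

Lemma pe_eval p0 A x :
  (pe p0 A).[x] = p0.@[mx_entries (map_mx (horner_eval x) A)].
Proof.
rewrite mevalE /pe horner_sum; apply: eq_bigr => m _.
rewrite hornerM hornerC horner_prod; congr (_ * _); apply: eq_bigr => i _.
by rewrite horner_exp /mx_entries -map_mxvec mxE.
Qed.

Lemma zariski_two (U : 'M[K]_n -> Prop) (P Q : 'M[K]_n) :
  zariski_open_GL U -> (exists g, U g) -> Q *m P = 1%:M ->
  exists g, U g /\ U (g *m P).
Proof.
case=> S HS [g0 Ug0] QP.
have [g0u [p0 [Sp0 p0g0]]] := (HS g0).1 Ug0.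
have Pu : P \in unitmx by case: (mulmx1_unit QP).
pose D := g0 *m Q - g0.
pose M : 'M[{poly K}]_n := map_mx polyC g0 + 'X *: map_mx polyC D.
have Mev x : map_mx (horner_eval x) M = g0 + x *: D.
  by apply/matrixP=> i j; rewrite !mxE /horner_eval hornerD hornerM hornerX !hornerC.
have MPev x : map_mx (horner_eval x) (M *m map_mx polyC P) = (g0 + x *: D) *m P.
  rewrite map_mxM Mev; congr (_ *m _).
  by apply/matrixP=> i j; rewrite !mxE /= horner_evalE hornerC.
have hdet x : (\det M).[x] = \det (g0 + x *: D).
  by rewrite -Mev det_map_mx.
pose q := \det M * pe p0 M * pe p0 (M *m map_mx polyC P).
have nz (r : {poly K}) y : r.[y] != 0 -> r != 0.
  by apply: contraNneq => ->; rewrite horner0.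
have q0 : q != 0.
  rewrite !mulf_neq0 //.
  - apply: (nz _ 0); rewrite hdet scale0r addr0 -unitfE -unitmxE //.
  - by apply: (nz _ 0); rewrite pe_eval Mev scale0r addr0.
  - apply: (nz _ 1); rewrite pe_eval MPev scale1r /D addrC subrK -mulmxA QP mulmx1 //.
have [x qx] := poly_nonroot q0.
move: qx; rewrite !hornerM => qx.
have [h12 h3] : (\det M).[x] * (pe p0 M).[x] != 0 /\ (pe p0 (M *m map_mx polyC P)).[x] != 0.
  by move: qx; rewrite mulf_eq0 negb_or => /andP.
move: h12; rewrite mulf_eq0 negb_or => /andP [h1 h2].
have gu : g0 + x *: D \in unitmx by rewrite unitmxE unitfE -hdet.
exists (g0 + x *: D); split; apply/HS; split.
- exact: gu.
- by exists p0; split => //; rewrite -(Mev x) -pe_eval.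
- by rewrite unitmx_mul gu Pu.
- by exists p0; split => //; rewrite -(MPev x) -pe_eval.
Qed.

End Zar.
Section Trop.
Variables (K : fieldType) (n : nat) (R : realType).

Lemma sum_seq_pick (T : eqType) (r : seq T) (P : pred T) (F : T -> K) m :
  uniq r -> \sum_(x <- r | P x) (if x == m then F x else 0)
          = if (m \in r) && P m then F m else 0.
Proof.
elim: r => [|a r IH] /=; first by rewrite big_nil.
case/andP=> anr ur; rewrite big_cons IH // in_cons.
have [eam|nam] := eqVneq a m.
  subst a; rewrite /= (negbTE anr) /=; case: (P m); by rewrite ?addr0.
by rewrite /=; case: (P a); rewrite ?add0r.
Qed.

Lemma mcoeff_in_form (w : 'I_n -> R) (f : {mpoly K[n]}) m :
  (in_form w f)@_m =
  if all (fun m' => wt w m <= wt w m') (msupp f) then f@_m else 0.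
Proof.
rewrite /in_form raddf_sum /=.
rewrite (eq_bigr (fun x => if x == m then f@_x else 0)); last first.
  by move=> x _; rewrite mcoeffZ mcoeffX; case: eqP; rewrite ?mulr1 ?mulr0.
rewrite sum_seq_pick ?msupp_uniq //.
case: (boolP (m \in msupp f)) => //= /memN_msupp_eq0 ->.
by case: ifP.
Qed.

Lemma wt_perm (w : 'I_n -> R) (s : 'S_n) m :
  wt (fun i => w (s i)) m = wt w [multinom m ((s^-1)%g i) | i < n].
Proof.
rewrite /wt [RHS](reindex_inj (@perm_inj _ s)) /=.
by apply: eq_bigr => i _; rewrite mnmE permK.
Qed.

Lemma in_form_msym (s : 'S_n) (w : 'I_n -> R) (f : {mpoly K[n]}) :
  in_form (fun i => w (s i)) (msym (s^-1)%g f) = msym (s^-1)%g (in_form w f).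
Proof.
apply/mpolyP => m; rewrite mcoeff_in_form !mcoeff_sym mcoeff_in_form.
congr (if _ then _ else _).
apply/allP/allP => /= H m'.
  move=> m'f; have := H [multinom m' (s i) | i < n].
  rewrite !wt_perm.
  have -> : [multinom [multinom m' (s i) | i < n] ((s^-1)%g i) | i < n] = m'.
    by apply/mnmP => i; rewrite !mnmE permKV.
  apply; rewrite mcoeff_msupp mcoeff_sym.
  have -> : [multinom [multinom m' (s i) | i < n] ((s^-1)%g i) | i < n] = m'.
    by apply/mnmP => i; rewrite !mnmE permKV.
  by rewrite -mcoeff_msupp.
rewrite mcoeff_msupp mcoeff_sym -mcoeff_msupp => /H.
by rewrite !wt_perm.
Qed.

Lemma is_monomial_msym (t : 'S_n) (q : {mpoly K[n]}) :
  is_monomial (msym t q) -> is_monomial q.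
Proof.
case=> c [m [c0 e]]; exists c, [multinom m (t i) | i < n]; split => //.
have -> : q = msym (t^-1)%g (msym t q) by rewrite -msymMm mulgV msym1m.
by rewrite e msymZ msymX invgK.
Qed.

Lemma msymXU (t : 'S_n) (j : 'I_n) : msym t ('X_j : {mpoly K[n]}) = 'X_(t j).
Proof. by rewrite /msym mmapX mmap1U. Qed.

Lemma lin_act_perm (g : 'M[K]_n) (t : 'S_n) f :
  lin_act (g *m perm_mx t) f = msym t (lin_act g f).
Proof.
rewrite /lin_act !comp_mpolyEX raddf_sum /=; apply: eq_bigr => m _.
rewrite msymZ !comp_mpolyX rmorph_prod /=; congr (_ *: _).
apply: eq_bigr => i _; rewrite rmorphXn /= !tnth_mktuple; congr (_ ^+ _).
rewrite raddf_sum /=.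
under eq_bigr => k _ do rewrite mxE scaler_suml.
rewrite exchange_big /=; apply: eq_bigr => j _.
rewrite msymZ msymXU (bigD1 (t j)) //= big1 ?addr0.
  by rewrite /perm_mx !mxE eqxx mulr1.
by move=> k nk; rewrite /perm_mx !mxE eq_sym (negbTE nk) mulr0 scale0r.
Qed.

End Trop.

Theorem theorem7p4 (K : closedFieldType) (R : realType) (n : nat)
    (I : {mpoly K[n]} -> Prop) (F : ('I_n -> R) -> Prop) :
  [pchar K] =i pred0 ->
  is_graded_ideal I -> nonzero_ideal I ->
  is_generic_trop I F ->
  forall w : 'I_n -> R, F w ->
  forall s : 'S_n, F (fun i => w (s i)).
Proof.
move=> _ _ _ [U [HU [g0 Ug0] HF]] w Fw s.
have QP : perm_mx s *m perm_mx (s^-1)%g = 1%:M :> 'M[K]_n.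
  by rewrite -perm_mxM mulgV perm_mx1.

have [g [Ug UgP]] := zariski_two HU (ex_intro _ g0 Ug0) QP.

apply/(HF _ UgP); have Tw := (HF _ Ug w).2 Fw.
move=> h [f [If ->]].

rewrite (lin_act_perm g (s^-1)%g f).

rewrite (in_form_msym s w).

move/is_monomial_msym.

apply: (Tw (lin_act g f)).

by exists f.
Qed.
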